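(* Let $e^{i\theta(p)}=\frac{\sqrt{1-p^2}}{p}\left(\frac{\sqrt{2}\,p}{1+p}\sqrt{\frac{p}{1-p}}+\frac{p\,i}{1+p}\right)$ (a complex number of modulus one). Then the tuple $(e^{i\theta(p)}p,\sqrt{1-p^2})$ is simulable.
   Context: Let $p\in[0,1]$ be an unknown parameter and let $|p\rangle=\sqrt{p}|0\rangle+\sqrt{1-p}|1\rangle$. For a complex function $h(p)$ write $|f_h\rangle=\frac{1}{\sqrt{1+|h(p)|^2}}(h(p)|0\rangle+|1\rangle)$. A tuple $(k_0(p),k_1(p))$ of complex functions with $|k_0|^2+|k_1|^2=1$ is called simulable if, starting from an unbounded supply of copies of $|p\rangle$, one can produce the single-qubit state $|f_{k_0/k_1}\rangle=k_0(p)|0\rangle+k_1(p)|1\rangle$ (up to a global phase) in finitely many steps with nonzero success probability, where each step applies a unitary transformation or a measurement (in the computational basis) to the current state together with auxiliary qubits; the operations may not depend on $p$. Auxiliary qubits may be other simulable states or constant states $|a_c\rangle=\frac{1}{\sqrt{|a|^2+1}}(a|0\rangle+|1\rangle)$ with $a\in\mathbb{C}$ a constant independent of $p$. *)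

(* Defs.v *)
From HB Require Import structures.
From mathcomp Require Import all_boot all_order all_algebra.
From mathcomp Require Import complex.
From mathcomp Require Import reals.
Set Implicit Arguments. Unset Strict Implicit. Unset Printing Implicit Defensive.
Import Order.TTheory GRing.Theory Num.Theory.
Local Open Scope ring_scope.
Local Open Scope complex_scope.

Section QSim.
Variable R : realType.
Local Notation C := (R[i]).

Definition basis (N : nat) := {ffun 'I_N -> bool}.

(* An (unnormalized) N-qubit pure state: amplitudes on the computational basis. *)
Definition qstate (N : nat) := basis N -> C.

(* A single-qubit state as a function of the parameter p: amplitude of |b>. *)
Definition qubit_fun := R -> bool -> C.

Definition p_qubit : qubit_fun :=
  fun p b => if b then (Num.sqrt (1 - p))%:C else (Num.sqrt p)%:C.

Definition const_qubit (a : C) : qubit_fun :=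
  fun _ b => ((Num.sqrt (Normc.normc a ^+ 2 + 1))^-1)%:C * (if b then 1 else a).

Definition tuple_qubit (k0 k1 : R -> C) : qubit_fun :=
  fun p b => if b then k1 p else k0 p.

(* A p-independent operation on the N-qubit register: a matrix U acting on
   all N qubits (amplitude map x |-> sum_y U x y psi y), or a computational
   basis measurement of qubit j with (postselected) outcome b. *)
Inductive op (N : nat) :=
| OpUnitary of (basis N -> basis N -> C)
| OpMeasure of 'I_N & bool.

Definition is_unitary N (U : basis N -> basis N -> C) : Prop :=
  forall x y : basis N, \sum_(z : basis N) (U z x)^* * U z y = (x == y)%:R.

Definition valid_op N (o : op N) : Prop :=
  match o with OpUnitary U => is_unitary U | OpMeasure _ _ => True end.

Definition apply_op N (o : op N) (psi : qstate N) : qstate N :=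
  match o with
  | OpUnitary U => fun x => \sum_(y : basis N) U x y * psi y
  | OpMeasure j b => fun x => if x j == b then psi x else 0
  end.

Fixpoint valid_ops N (ops : seq (op N)) : Prop :=
  match ops with [::] => True | o :: ops' => valid_op o /\ valid_ops ops' end.

(* Run the steps in order (unnormalized branch amplitude: the state along
   the branch of the chosen measurement outcomes). *)
Definition run N (ops : seq (op N)) (psi : qstate N) : qstate N :=
  foldl (fun s o => apply_op o s) psi ops.

Definition product_state N (init : 'I_N -> qubit_fun) (p : R) : qstate N :=
  fun x => \prod_(i < N) init i p (x i).

Definition in01 (p : R) := 0 <= p <= 1.

Definition setbit N (r : basis N) (o : 'I_N) (b : bool) : basis N :=
  [ffun i => if i == o then b else r i].

(* The protocol: N qubits (all copies and auxiliary qubits that are ever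
   used), a finite p-independent sequence of unitaries and computational
   basis measurements (along one branch of outcomes), followed by a final
   computational-basis measurement of all qubits other than the output
   qubit o with outcome r; the output qubit is then in the state
   out(0)|0> + out(1)|1> (unnormalized), which must be nonzero (nonzero
   success probability) and equal to the target up to a global phase. *)
Inductive simulable : (R -> C) -> (R -> C) -> Prop :=
| Simulable_intro (k0 k1 : R -> C) (N : nat) (init : 'I_N -> qubit_fun)
    (ops : seq (op N)) (o : 'I_N) (r : basis N) :
    (forall p, in01 p -> Normc.normc (k0 p) ^+ 2 + Normc.normc (k1 p) ^+ 2 = 1) ->
    (forall i : 'I_N,
        init i = p_qubit
        \/ (exists a : C, init i = const_qubit a)
        \/ (exists k0' k1' : R -> C, simulable k0' k1' /\
              forall p, in01 p -> forall b, init i p b = tuple_qubit k0' k1' p b)) ->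
    valid_ops ops ->
    (forall p, in01 p ->
       let psi := run ops (product_state init p) in
       exists c : C, c != 0 /\
         psi (setbit r o false) = c * k0 p /\
         psi (setbit r o true) = c * k1 p) ->
    simulable k0 k1.

(* e^{i theta(p)} = sqrt(1-p^2)/p * ( sqrt 2 p/(1+p) * sqrt(p/(1-p)) + p i/(1+p) )
   for 0 < p < 1; at the endpoints (where the formula has 0/0) we take its
   continuous extension: i at p = 0 and 1 at p = 1. *)
Definition eitheta (p : R) : C :=
  if (0 < p < 1) then
    ((Num.sqrt (1 - p ^+ 2) / p)%:C) *
    ((Num.sqrt 2 * p / (1 + p) * Num.sqrt (p / (1 - p)))%:C
     + (p / (1 + p))%:C * 'i)
  else if p == 0 then 'i else 1.

End QSim.

(* Main.v *)
Require Import Defs.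
From HB Require Import structures.
From mathcomp Require Import all_boot all_order all_algebra.
From mathcomp Require Import complex.
From mathcomp Require Import reals.
From mathcomp Require Import ring lra.
Set Implicit Arguments. Unset Strict Implicit.
Import Order.TTheory GRing.Theory Num.Theory.
Local Open Scope ring_scope.
Local Open Scope complex_scope.

Section H.
Variable R : realType.
Local Notation C := (R[i]).

Definition U2 N (u v : basis N) (a b c d : C) : basis N -> basis N -> C :=
  fun x y => if x == u then (if y == u then a else if y == v then b else 0)
             else if x == v then (if y == u then c else if y == v then d else 0)
             else (x == y)%:R.

Lemma apply_U2 N (u v : basis N) a b c d (psi : qstate R N) x : u != v ->
  apply_op (@OpUnitary R N (U2 u v a b c d)) psi x =
  if x == u then a * psi u + b * psi v
  else if x == v then c * psi u + d * psi v else psi x.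
Proof.
move=> uv /=; have vu : v != u by rewrite eq_sym.
rewrite (bigD1 u) // (bigD1 v) //= /U2 !eqxx (negbTE vu).
case: (x =P u) => [Hx|/eqP xu]; first subst x.
  rewrite big1 ?addr0 // => z /andP[zu zv].
  by rewrite (negbTE zu) (negbTE zv) mul0r.
case: (x =P v) => [Hx|/eqP xv]; first subst x.
  rewrite big1 ?addr0 // => z /andP[zu zv].
  by rewrite (negbTE zu) (negbTE zv) mul0r.
rewrite ?(negbTE xu) ?(negbTE xv) !mul0r !add0r (bigD1 x) /=; last by rewrite xu xv.
rewrite eqxx mul1r big1 ?addr0 // => z /andP[/andP[zu zv] zx].
by rewrite eq_sym (negbTE zx) mul0r.
Qed.

Lemma conjc_nat (n : bool) : (Num.conj (n%:R : C)) = n%:R.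
Proof. by case: n; apply/eqP; rewrite eq_complex /= oppr0 !eqxx. Qed.

Lemma rest_sum N (u v w y : basis N) :
  \sum_(i | (i != u) && (i != v)) ((Num.conj ((i == w)%:R : C)) * (i == y)%:R)
  = ((w == y) && (w != u) && (w != v))%:R.
Proof.
case: (boolP ((w != u) && (w != v))) => [/andP[wu wv]|H].
  rewrite (bigD1 w) /=; last by rewrite wu wv.
  rewrite eqxx conjc_nat mul1r big1 ?addr0 ?wu ?wv ?andbT //.
  move=> z /andP[_ zw]. by rewrite (negbTE zw) conjc_nat mul0r.
rewrite big1; last first.
  move=> z /andP[zu zv]; case: (z =P w) => [Hz|_]; last by rewrite conjc_nat mul0r.
  by subst z; rewrite zu zv in H.
by move: H; case: (w != u); case: (w != v); rewrite ?andbF.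
Qed.

Lemma U2_unitary N (u v : basis N) a b c d : u != v ->
  Num.conj a * a + Num.conj c * c = 1 -> Num.conj b * b + Num.conj d * d = 1 ->
  Num.conj a * b + Num.conj c * d = 0 -> Num.conj b * a + Num.conj d * c = 0 ->
  Defs.is_unitary (U2 u v a b c d).
Proof.
move=> uv h1 h2 h3 h4 x y; have vu : v != u by rewrite eq_sym.
rewrite (bigD1 u) // (bigD1 v) //=.
rewrite (eq_bigr (fun i => Num.conj ((i == x)%:R : C) * (i == y)%:R)); last first.
  by move=> i /andP[iu iv]; rewrite /U2 (negbTE iu) (negbTE iv).
rewrite rest_sum /U2 !eqxx (negbTE vu).
case: (eqVneq x u) => [Hx|xu]; first subst x.
  case: (eqVneq y u) => [Hy|yu]; first subst y.
    rewrite ?eqxx ?(negbTE uv) ?(negbTE vu) ?conjc_nat /= ?andbF ?andFb ?andbT ?addr0 ?add0r ?mulr0 ?mul0r; by rewrite ?h1 ?h2 ?h3 ?h4 ?conjC0 ?mul0r ?add0r ?addr0.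
  case: (eqVneq y v) => [Hy|yv]; first subst y.
    rewrite ?eqxx ?(negbTE uv) ?(negbTE vu) ?conjc_nat /= ?andbF ?andFb ?andbT ?addr0 ?add0r ?mulr0 ?mul0r; by rewrite ?h1 ?h2 ?h3 ?h4 ?conjC0 ?mul0r ?add0r ?addr0.
  rewrite ?eqxx ?(negbTE uv) ?(negbTE vu) ?conjc_nat /= ?andbF ?andFb ?andbT ?addr0 ?add0r ?mulr0 ?mul0r; by rewrite ?h1 ?h2 ?h3 ?h4 ?conjC0 ?mul0r ?add0r ?addr0.
case: (eqVneq x v) => [Hx|xv]; first subst x.
  case: (eqVneq y u) => [Hy|yu]; first subst y.
    rewrite ?eqxx ?(negbTE uv) ?(negbTE vu) ?conjc_nat /= ?andbF ?andFb ?andbT ?addr0 ?add0r ?mulr0 ?mul0r; by rewrite ?h1 ?h2 ?h3 ?h4 ?conjC0 ?mul0r ?add0r ?addr0.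
  case: (eqVneq y v) => [Hy|yv]; first subst y.
    rewrite ?eqxx ?(negbTE uv) ?(negbTE vu) ?conjc_nat /= ?andbF ?andFb ?andbT ?addr0 ?add0r ?mulr0 ?mul0r; by rewrite ?h1 ?h2 ?h3 ?h4 ?conjC0 ?mul0r ?add0r ?addr0.
  rewrite ?eqxx ?(negbTE uv) ?(negbTE vu) ?conjc_nat /= ?andbF ?andFb ?andbT ?addr0 ?add0r ?mulr0 ?mul0r; by rewrite ?h1 ?h2 ?h3 ?h4 ?conjC0 ?mul0r ?add0r ?addr0.
case: (eqVneq y u) => [Hy|yu]; first subst y.
  rewrite ?eqxx ?(negbTE uv) ?(negbTE vu) ?conjc_nat /= ?andbF ?andFb ?andbT ?addr0 ?add0r ?mulr0 ?mul0r; by rewrite ?h1 ?h2 ?h3 ?h4 ?conjC0 ?mul0r ?add0r ?addr0.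
case: (eqVneq y v) => [Hy|yv]; first subst y.
  rewrite ?eqxx ?(negbTE uv) ?(negbTE vu) ?conjc_nat /= ?andbF ?andFb ?andbT ?addr0 ?add0r ?mulr0 ?mul0r; by rewrite ?h1 ?h2 ?h3 ?h4 ?conjC0 ?mul0r ?add0r ?addr0.
rewrite ?eqxx ?(negbTE uv) ?(negbTE vu) ?conjc_nat /= ?andbF ?andFb ?andbT ?addr0 ?add0r ?mulr0 ?mul0r; by rewrite ?h1 ?h2 ?h3 ?h4 ?conjC0 ?mul0r ?add0r ?addr0.
Qed.

Definition b0 : basis 3 := [ffun _ => false].
Definition i1 : 'I_3 := @Ordinal 3 1 isT.
Definition i2 : 'I_3 := @Ordinal 3 2 isT.
Definition bA := setbit b0 ord0 false.
Definition bB := setbit b0 ord0 true.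
Definition bE2 := setbit b0 i1 true.
Definition bE3 := setbit b0 i2 true.
Definition bE7 : basis 3 := [ffun _ => true].

Lemma diffs : [/\ bA != bB, bA != bE2, bA != bE3, bA != bE7 &
  [/\ bB != bE2, bB != bE3, bB != bE7, bE2 != bE3 & [/\ bE2 != bE7 , bE3 != bE7 & bB != bA]]].
Proof.
have d : forall x y : basis 3, forall k, x k != y k -> x != y.
  by move=> x y k H; apply/eqP => E; rewrite E eqxx in H.
repeat split.
all: first [ apply: (d _ _ ord0); by rewrite !ffunE
           | apply: (d _ _ i1); by rewrite !ffunE
           | apply: (d _ _ i2); by rewrite !ffunE ].
Qed.

Lemma psi_val (p : R) (x : basis 3) : product_state (fun _ => @p_qubit R) p x =
  p_qubit p (x ord0) * (p_qubit p (x i1) * (p_qubit p (x i2) * 1)).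
Proof.
rewrite /product_state !big_ord_recl big_ord0.
have -> : lift ord0 ord0 = i1 :> 'I_3 by apply/val_inj.
by have -> : lift ord0 (lift ord0 (ord0 : 'I_1)) = i2 :> 'I_3 by apply/val_inj.
Qed.

Lemma n_bA_bB : (bA == bB) = false.
Proof.
apply/negbTE; have d : forall x y : basis 3, forall k, x k != y k -> x != y.
  by move=> x y k H; apply/eqP => E; rewrite E eqxx in H.
first [ apply: (d _ _ ord0); by rewrite !ffunE
      | apply: (d _ _ i1); by rewrite !ffunE
      | apply: (d _ _ i2); by rewrite !ffunE ].
Qed.
Lemma n_bA_bE2 : (bA == bE2) = false.
Proof.
apply/negbTE; have d : forall x y : basis 3, forall k, x k != y k -> x != y.
  by move=> x y k H; apply/eqP => E; rewrite E eqxx in H.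
first [ apply: (d _ _ ord0); by rewrite !ffunE
      | apply: (d _ _ i1); by rewrite !ffunE
      | apply: (d _ _ i2); by rewrite !ffunE ].
Qed.
Lemma n_bA_bE3 : (bA == bE3) = false.
Proof.
apply/negbTE; have d : forall x y : basis 3, forall k, x k != y k -> x != y.
  by move=> x y k H; apply/eqP => E; rewrite E eqxx in H.
first [ apply: (d _ _ ord0); by rewrite !ffunE
      | apply: (d _ _ i1); by rewrite !ffunE
      | apply: (d _ _ i2); by rewrite !ffunE ].
Qed.
Lemma n_bA_bE7 : (bA == bE7) = false.
Proof.
apply/negbTE; have d : forall x y : basis 3, forall k, x k != y k -> x != y.
  by move=> x y k H; apply/eqP => E; rewrite E eqxx in H.
first [ apply: (d _ _ ord0); by rewrite !ffunE
      | apply: (d _ _ i1); by rewrite !ffunE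
      | apply: (d _ _ i2); by rewrite !ffunE ].
Qed.
Lemma n_bB_bA : (bB == bA) = false.
Proof.
apply/negbTE; have d : forall x y : basis 3, forall k, x k != y k -> x != y.
  by move=> x y k H; apply/eqP => E; rewrite E eqxx in H.
first [ apply: (d _ _ ord0); by rewrite !ffunE
      | apply: (d _ _ i1); by rewrite !ffunE
      | apply: (d _ _ i2); by rewrite !ffunE ].
Qed.
Lemma n_bB_bE2 : (bB == bE2) = false.
Proof.
apply/negbTE; have d : forall x y : basis 3, forall k, x k != y k -> x != y.
  by move=> x y k H; apply/eqP => E; rewrite E eqxx in H.
first [ apply: (d _ _ ord0); by rewrite !ffunE
      | apply: (d _ _ i1); by rewrite !ffunE
      | apply: (d _ _ i2); by rewrite !ffunE ].
Qed.
Lemma n_bB_bE3 : (bB == bE3) = false.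
Proof.
apply/negbTE; have d : forall x y : basis 3, forall k, x k != y k -> x != y.
  by move=> x y k H; apply/eqP => E; rewrite E eqxx in H.
first [ apply: (d _ _ ord0); by rewrite !ffunE
      | apply: (d _ _ i1); by rewrite !ffunE
      | apply: (d _ _ i2); by rewrite !ffunE ].
Qed.
Lemma n_bB_bE7 : (bB == bE7) = false.
Proof.
apply/negbTE; have d : forall x y : basis 3, forall k, x k != y k -> x != y.
  by move=> x y k H; apply/eqP => E; rewrite E eqxx in H.
first [ apply: (d _ _ ord0); by rewrite !ffunE
      | apply: (d _ _ i1); by rewrite !ffunE
      | apply: (d _ _ i2); by rewrite !ffunE ].
Qed.
Lemma n_bE2_bA : (bE2 == bA) = false.
Proof.
apply/negbTE; have d : forall x y : basis 3, forall k, x k != y k -> x != y.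
  by move=> x y k H; apply/eqP => E; rewrite E eqxx in H.
first [ apply: (d _ _ ord0); by rewrite !ffunE
      | apply: (d _ _ i1); by rewrite !ffunE
      | apply: (d _ _ i2); by rewrite !ffunE ].
Qed.
Lemma n_bE2_bB : (bE2 == bB) = false.
Proof.
apply/negbTE; have d : forall x y : basis 3, forall k, x k != y k -> x != y.
  by move=> x y k H; apply/eqP => E; rewrite E eqxx in H.
first [ apply: (d _ _ ord0); by rewrite !ffunE
      | apply: (d _ _ i1); by rewrite !ffunE
      | apply: (d _ _ i2); by rewrite !ffunE ].
Qed.
Lemma n_bE2_bE3 : (bE2 == bE3) = false.
Proof.
apply/negbTE; have d : forall x y : basis 3, forall k, x k != y k -> x != y.
  by move=> x y k H; apply/eqP => E; rewrite E eqxx in H.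
first [ apply: (d _ _ ord0); by rewrite !ffunE
      | apply: (d _ _ i1); by rewrite !ffunE
      | apply: (d _ _ i2); by rewrite !ffunE ].
Qed.
Lemma n_bE2_bE7 : (bE2 == bE7) = false.
Proof.
apply/negbTE; have d : forall x y : basis 3, forall k, x k != y k -> x != y.
  by move=> x y k H; apply/eqP => E; rewrite E eqxx in H.
first [ apply: (d _ _ ord0); by rewrite !ffunE
      | apply: (d _ _ i1); by rewrite !ffunE
      | apply: (d _ _ i2); by rewrite !ffunE ].
Qed.
Lemma n_bE3_bA : (bE3 == bA) = false.
Proof.
apply/negbTE; have d : forall x y : basis 3, forall k, x k != y k -> x != y.
  by move=> x y k H; apply/eqP => E; rewrite E eqxx in H.
first [ apply: (d _ _ ord0); by rewrite !ffunE
      | apply: (d _ _ i1); by rewrite !ffunE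
      | apply: (d _ _ i2); by rewrite !ffunE ].
Qed.
Lemma n_bE3_bB : (bE3 == bB) = false.
Proof.
apply/negbTE; have d : forall x y : basis 3, forall k, x k != y k -> x != y.
  by move=> x y k H; apply/eqP => E; rewrite E eqxx in H.
first [ apply: (d _ _ ord0); by rewrite !ffunE
      | apply: (d _ _ i1); by rewrite !ffunE
      | apply: (d _ _ i2); by rewrite !ffunE ].
Qed.
Lemma n_bE3_bE2 : (bE3 == bE2) = false.
Proof.
apply/negbTE; have d : forall x y : basis 3, forall k, x k != y k -> x != y.
  by move=> x y k H; apply/eqP => E; rewrite E eqxx in H.
first [ apply: (d _ _ ord0); by rewrite !ffunE
      | apply: (d _ _ i1); by rewrite !ffunE
      | apply: (d _ _ i2); by rewrite !ffunE ].
Qed.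
Lemma n_bE3_bE7 : (bE3 == bE7) = false.
Proof.
apply/negbTE; have d : forall x y : basis 3, forall k, x k != y k -> x != y.
  by move=> x y k H; apply/eqP => E; rewrite E eqxx in H.
first [ apply: (d _ _ ord0); by rewrite !ffunE
      | apply: (d _ _ i1); by rewrite !ffunE
      | apply: (d _ _ i2); by rewrite !ffunE ].
Qed.
Lemma n_bE7_bA : (bE7 == bA) = false.
Proof.
apply/negbTE; have d : forall x y : basis 3, forall k, x k != y k -> x != y.
  by move=> x y k H; apply/eqP => E; rewrite E eqxx in H.
first [ apply: (d _ _ ord0); by rewrite !ffunE
      | apply: (d _ _ i1); by rewrite !ffunE
      | apply: (d _ _ i2); by rewrite !ffunE ].
Qed.
Lemma n_bE7_bB : (bE7 == bB) = false.
Proof.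
apply/negbTE; have d : forall x y : basis 3, forall k, x k != y k -> x != y.
  by move=> x y k H; apply/eqP => E; rewrite E eqxx in H.
first [ apply: (d _ _ ord0); by rewrite !ffunE
      | apply: (d _ _ i1); by rewrite !ffunE
      | apply: (d _ _ i2); by rewrite !ffunE ].
Qed.
Lemma n_bE7_bE2 : (bE7 == bE2) = false.
Proof.
apply/negbTE; have d : forall x y : basis 3, forall k, x k != y k -> x != y.
  by move=> x y k H; apply/eqP => E; rewrite E eqxx in H.
first [ apply: (d _ _ ord0); by rewrite !ffunE
      | apply: (d _ _ i1); by rewrite !ffunE
      | apply: (d _ _ i2); by rewrite !ffunE ].
Qed.
Lemma n_bE7_bE3 : (bE7 == bE3) = false.
Proof.
apply/negbTE; have d : forall x y : basis 3, forall k, x k != y k -> x != y.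
  by move=> x y k H; apply/eqP => E; rewrite E eqxx in H.
first [ apply: (d _ _ ord0); by rewrite !ffunE
      | apply: (d _ _ i1); by rewrite !ffunE
      | apply: (d _ _ i2); by rewrite !ffunE ].
Qed.


Definition ops3 (al be ga : R) : seq (op R 3) :=
  [:: OpUnitary (U2 bA bE2 be%:C (al%:C * 'i) (al%:C * 'i) be%:C);
      OpUnitary (U2 bB bE3 ga%:C ga%:C ga%:C (- ga%:C));
      OpUnitary (U2 bB bE7 be%:C al%:C al%:C (- be%:C))].

Lemma run_vals (p al be ga : R) :
  let s := Num.sqrt p in let t := Num.sqrt (1 - p) in
  let psi := run (ops3 al be ga) (product_state (fun _ => @p_qubit R) p) in
  psi bA = (be * s^+3) +i* (al * t * s^+2) /\
  psi bB = (be * ga * 2 * s^+2 * t + al * t^+3)%:C.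
Proof.
move=> s t psi.
have -> : psi = apply_op (OpUnitary (U2 bB bE7 be%:C al%:C al%:C (- be%:C)))
   (apply_op (OpUnitary (U2 bB bE3 ga%:C ga%:C ga%:C (- ga%:C)))
   (apply_op (OpUnitary (U2 bA bE2 be%:C (al%:C * 'i) (al%:C * 'i) be%:C))
     (product_state (fun _ => @p_qubit R) p))) by [].
rewrite !apply_U2 ?n_bA_bB ?n_bA_bE2 ?n_bA_bE3 ?n_bA_bE7 ?n_bB_bA ?n_bB_bE2 ?n_bB_bE3 ?n_bB_bE7 ?n_bE2_bA ?n_bE2_bB ?n_bE2_bE3 ?n_bE2_bE7 ?n_bE3_bA ?n_bE3_bB ?n_bE3_bE2 ?n_bE3_bE7 ?n_bE7_bA ?n_bE7_bB ?n_bE7_bE2 ?n_bE7_bE3 ?eqxx ?n_bA_bB ?n_bA_bE2 ?n_bA_bE3 ?n_bA_bE7 ?n_bB_bA ?n_bB_bE2 ?n_bB_bE3 ?n_bB_bE7 ?n_bE2_bA ?n_bE2_bB ?n_bE2_bE3 ?n_bE2_bE7 ?n_bE3_bA ?n_bE3_bB ?n_bE3_bE2 ?n_bE3_bE7 ?n_bE7_bA ?n_bE7_bB ?n_bE7_bE2 ?n_bE7_bE3 //.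
rewrite !psi_val /bA /bB /bE2 /bE3 /bE7 /setbit !ffunE /= -/s -/t.
split; apply/eqP; rewrite eq_complex /=; apply/andP; split; apply/eqP; ring.
Qed.

End H.


Lemma normc2 (R : realType) (z : R[i]) :
  Normc.normc z ^+ 2 = (complex.Re z) ^+ 2 + (complex.Im z) ^+ 2.
Proof. by case: z => a b /=; rewrite sqr_sqrtr // addr_ge0 // sqr_ge0. Qed.

Lemma realC_neq0 (R : realType) (x : R) : x != 0 -> x%:C != 0 :> R[i].
Proof. by move=> h; apply/negP; rewrite eq_complex /= eqxx andbT; apply/negP. Qed.

Theorem mainTheorem4 (R : realType) :
  simulable (fun p : R => eitheta p * p%:C) (fun p : R => (Num.sqrt (1 - p ^+ 2))%:C).
Proof.
pose r2 : R := Num.sqrt 2. pose r3 : R := Num.sqrt 3.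
pose al : R := r3^-1. pose be : R := r2 * al. pose ga : R := r2^-1.
have r2p : 0 < r2 by rewrite sqrtr_gt0.
have r3p : 0 < r3 by rewrite sqrtr_gt0.
have r22 : r2 ^+ 2 = 2 by rewrite sqr_sqrtr.
have r32 : r3 ^+ 2 = 3 by rewrite sqr_sqrtr.
have ha : al * al = 3^-1 by rewrite /al -expr2 exprVn r32.
have hb : be * be = 2/3 by rewrite /be /al mulrACA -expr2 r22 -expr2 exprVn r32.
have hg : ga * ga = 2^-1 by rewrite /ga -expr2 exprVn r22.
have hbg : be * ga = al by rewrite /be /ga mulrAC divff ?mul1r // gt_eqF.
have alp : 0 < al by rewrite /al invr_gt0.
have bep : 0 < be by rewrite /be mulr_gt0.
have key : forall p : R, 0 < p -> p < 1 ->
  [/\ 0 < Num.sqrt p, 0 < Num.sqrt (1 - p), 0 < Num.sqrt (1 - p ^+ 2),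
      Num.sqrt (p / (1 - p)) = Num.sqrt p / Num.sqrt (1 - p) &
      eitheta p * p%:C = (Num.sqrt (1 - p ^+ 2) * (r2 * p / (1 + p) * Num.sqrt (p / (1 - p))))
                         +i* (Num.sqrt (1 - p ^+ 2) * (p / (1 + p)))].
  move=> p p0 p1.
  have w0 : 0 < Num.sqrt (1 - p ^+ 2) by rewrite sqrtr_gt0; nra.
  split.
  - by rewrite sqrtr_gt0.
  - by rewrite sqrtr_gt0 subr_gt0.
  - exact: w0.
  - by rewrite sqrtrM ?sqrtrV // ?subr_ge0 ?ltW.
  rewrite /eitheta p0 p1 /= -/r2.
  have pn : p != 0 by rewrite gt_eqF.
  have pn1 : 1 + p != 0 by rewrite gt_eqF // ltr_wpDr // ltW.
  apply/eqP; rewrite eq_complex /=; apply/andP; split; apply/eqP; field; by rewrite pn pn1.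
apply: (@Simulable_intro R _ _ 3 (fun _ => @p_qubit R) (ops3 al be ga) ord0 b0).
- move=> p; rewrite /in01 => /andP[p0 p1].
  case: (eqVneq p 0) => [->|pn0].
    rewrite /eitheta ltxx /= eqxx !normc2 /= expr0n /= subr0 sqrtr1; rewrite ?expr1n ?addr0 ?sqrtr1 ?expr1n; lra.
  case: (eqVneq p 1) => [->|pn1].
    rewrite /eitheta ltxx andbF oner_eq0 !normc2 /= expr1n subrr sqrtr0; lra.
  have pp : 0 < p by rewrite lt_neqAle eq_sym pn0.
  have pl : p < 1 by rewrite lt_neqAle pn1.
  have [sp tp wp hm E] := key p pp pl.
  rewrite E !normc2 /= !exprMn sqr_sqrtr ?r22; last by nra.
  rewrite sqr_sqrtr; last by rewrite divr_ge0 ?subr_ge0 // ltW.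
  have pn : p != 0 by rewrite gt_eqF.
  have pn3 : 1 + p != 0 by rewrite gt_eqF // ltr_wpDr // ltW.
  have pn2 : 1 - p != 0 by rewrite gt_eqF // subr_gt0.
  field; by rewrite pn3 pn2.
- by move=> i; left.
- rewrite /ops3 /=; split; [|split; [|split=> //]]; apply: U2_unitary;
   rewrite ?n_bA_bE2 ?n_bB_bE3 ?n_bB_bE7 //;
   apply/eqP; rewrite eq_complex /=; apply/andP; split; apply/eqP; lra.
- move=> p; rewrite /in01 => /andP[p0 p1]; cbv zeta.
  have [HA HB] := run_vals p al be ga.
  rewrite -[setbit b0 ord0 false]/bA -[setbit b0 ord0 true]/bB HA HB hbg.
  case: (eqVneq p 0) => [->|pn0].
    exists al%:C; split; first by apply: realC_neq0; rewrite gt_eqF.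
    rewrite /eitheta ltxx /= eqxx sqrtr0 ?subr0 ?sqrtr1 ?expr0n /= ?subr0 ?sqrtr1.
    split; apply/eqP; rewrite eq_complex /=; apply/andP; split; apply/eqP; ring.
  case: (eqVneq p 1) => [->|pn1].
    exists be%:C; split; first by apply: realC_neq0; rewrite gt_eqF.
    rewrite /eitheta ltxx andbF oner_eq0 ?subrr ?sqrtr0 ?expr1n ?subrr ?sqrtr0 ?sqrtr1.
    split; apply/eqP; rewrite eq_complex /=; apply/andP; split; apply/eqP; try ring.
  have pp : 0 < p by rewrite lt_neqAle eq_sym pn0.
  have pl : p < 1 by rewrite lt_neqAle pn1.
  have [sp tp wp hm E] := key p pp pl.
  have tn : Num.sqrt (1 - p) != 0 by rewrite gt_eqF.
  have wn : Num.sqrt (1 - p ^+ 2) != 0 by rewrite gt_eqF.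
  have pn : p != 0 by rewrite gt_eqF.
  have pn3 : 1 + p != 0 by rewrite gt_eqF // ltr_wpDr // ltW.
  have hs : (Num.sqrt p) ^+ 2 = p by rewrite sqr_sqrtr // ltW.
  have ht : (Num.sqrt (1 - p)) ^+ 2 = 1 - p by rewrite sqr_sqrtr // subr_ge0 ltW.
  exists ((al * (2 * (Num.sqrt p) ^+ 2 * Num.sqrt (1 - p) + (Num.sqrt (1 - p)) ^+ 3)) / Num.sqrt (1 - p ^+ 2))%:C.
  split.
    apply: realC_neq0; rewrite gt_eqF // divr_gt0 // mulr_gt0 // addr_gt0 // ?mulr_gt0 ?exprn_gt0 //.
  split.
    rewrite E; apply/eqP; rewrite eq_complex /=; apply/andP; split; apply/eqP;
      apply/eqP; rewrite -subr_eq0; apply/eqP.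
      transitivity (r2 * al * Num.sqrt p * ((1 - 2 * p / (1 + p)) * ((Num.sqrt p) ^+ 2 - p) - p / (1 + p) * ((Num.sqrt (1 - p)) ^+ 2 - (1 - p)))).
        rewrite hm /be; field; by rewrite ?tn ?wn ?pn3 ?pn.
      by rewrite hs ht !subrr !mulr0 subrr mulr0.
    transitivity (al * Num.sqrt (1 - p) * ((1 - 2 * p / (1 + p)) * ((Num.sqrt p) ^+ 2 - p) - p / (1 + p) * ((Num.sqrt (1 - p)) ^+ 2 - (1 - p)))).
      field; by rewrite ?tn ?wn ?pn3 ?pn.
    by rewrite hs ht !subrr !mulr0 subrr mulr0.
  apply/eqP; rewrite eq_complex /=; apply/andP; split; apply/eqP; field; by rewrite ?wn.
Qed.
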